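(* Let $A,B$ be closed linear relations in $X^2$ such that $\{A,B\}$ is a dual pair with $B^*(0)\cap N(A^* )=\{0\}$ and $A^*(0)\cap N(B^* )=\{0\}$. Then $\dim N(1+B^*A^* )=\dim N(1+A^*B^* )$.
   Context: $X$ is a complex Hilbert space; linear relations are linear subspaces of $X^2=X\times X$. $T^*=\{(f,g):\langle g,x\rangle=\langle f,y\rangle\ \forall(x,y)\in T\}$; $T(0)=\{y:(0,y)\in T\}$; $N(T)=\{x:(x,0)\in T\}$. Closed relations $A,B$ form a dual pair if $A\subset B^*$ (equivalently $B\subset A^*$). Product: $CT=\{(x,z):\exists y,(x,y)\in T,(y,z)\in C\}$; $N(1+B^*A^* )=\{g:(g,-g)\in B^*A^*\}$, and similarly $N(1+A^*B^* )$. *)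

(* Defs.v *)
From HB Require Import structures.
From mathcomp Require Import all_boot all_order all_algebra.
From mathcomp Require Import complex.
From mathcomp Require Import reals.
Set Implicit Arguments. Unset Strict Implicit. Unset Printing Implicit Defensive.
Import Order.TTheory GRing.Theory Num.Theory.
Local Open Scope ring_scope.

Section Hilbert.
Variable R : realType.
Local Notation C := (R[i]).
Variable V : lmodType C.
Variable ip : V -> V -> C.   (* <x, y>, linear in the first argument *)

Definition hnorm (x : V) : R := Num.sqrt (complex.Re (ip x x)).

Definition hconverges (u : nat -> V) (x : V) : Prop :=
  forall e : R, 0 < e -> exists N : nat, forall n : nat, (N <= n)%N ->
    hnorm (u n - x) < e.

Definition hcauchy (u : nat -> V) : Prop :=
  forall e : R, 0 < e -> exists N : nat, forall m n : nat,
    (N <= m)%N -> (N <= n)%N -> hnorm (u m - u n) < e.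

Definition is_hilbert : Prop :=
  [/\ (forall (a : C) (x y z : V), ip (a *: x + y) z = a * ip x z + ip y z),
      (forall x y : V, ip y x = conjc (ip x y)),
      (forall x : V, 0 <= ip x x),
      (forall x : V, ip x x = 0 -> x = 0)
    & (forall u : nat -> V, hcauchy u -> exists x, hconverges u x)].

(* linear relations: subspaces of V x V, represented as binary predicates *)
Definition linrel := V -> V -> Prop.

Definition is_linrel (T : linrel) : Prop :=
  T 0 0 /\ forall (a : C) x y x' y', T x y -> T x' y' -> T (a *: x + x') (a *: y + y').

(* closed in V x V (product norm topology; sequential closedness) *)
Definition closed_rel (T : linrel) : Prop :=
  forall (u v : nat -> V) (x y : V), (forall n, T (u n) (v n)) ->
    hconverges u x -> hconverges v y -> T x y.

Definition adj (T : linrel) : linrel :=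
  fun f g => forall x y, T x y -> ip g x = ip f y.

Definition rel_comp (S T : linrel) : linrel :=
  fun x z => exists y, T x y /\ S y z.

Definition mulval (T : linrel) : V -> Prop := fun y => T 0 y.
Definition kerrel (T : linrel) : V -> Prop := fun x => T x 0.

(* N(1 + T) = {g : (g, -g) in T} *)
Definition ker_one_plus (T : linrel) : V -> Prop := fun g => T g (- g).

Definition lin_indep (b : V -> Prop) : Prop :=
  forall (s : seq V) (c : V -> C), uniq s -> (forall v, v \in s -> b v) ->
    \sum_(v <- s) c v *: v = 0 -> forall v, v \in s -> c v = 0.

Definition spans (S b : V -> Prop) : Prop :=
  forall x, S x -> exists (s : seq V) (c : V -> C),
    (forall v, v \in s -> b v) /\ x = \sum_(v <- s) c v *: v.

Definition hamel_basis (S b : V -> Prop) : Prop :=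
  (forall v, b v -> S v) /\ lin_indep b /\ spans S b.

(* dim S1 = dim S2: S1 and S2 have Hamel bases of the same cardinality *)
Definition same_dim (S1 S2 : V -> Prop) : Prop :=
  exists (b1 b2 : V -> Prop) (f : V -> V),
    [/\ hamel_basis S1 b1, hamel_basis S2 b2,
        (forall v, b1 v -> b2 (f v)),
        (forall v w, b1 v -> b1 w -> f v = f w -> v = w)
      & (forall w, b2 w -> exists2 v, b1 v & f v = w)].

End Hilbert.

(* Main.v *)
Require Import Defs.
From HB Require Import structures.
From mathcomp Require Import all_boot all_order all_algebra.
From mathcomp Require Import complex.
From mathcomp Require Import reals.
From mathcomp Require Import boolp classical_sets.
From Stdlib Require Import Classical ClassicalEpsilon.
Set Implicit Arguments. Unset Strict Implicit. Unset Printing Implicit Defensive.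
Import Order.TTheory GRing.Theory Num.Theory.
Local Open Scope classical_set_scope.
Local Open Scope ring_scope.

Section Bas.
Variable R : realType.
Variable V : lmodType R[i].

Lemma chain_fin (F : set (set V)) : total_on F subset ->
  forall s : seq V, (forall v, v \in s -> (\bigcup_(X in F) X) v) ->
  s = [::] \/ exists X, F X /\ forall v, v \in s -> X v.
Proof.
move=> tot; elim=> [|x s IH] H; first by left.
right; have [X0 FX0 X0x] := H x (mem_head _ _).
have [->|[X1 [FX1 X1s]]] := IH (fun v vs => H v (mem_behead (s:=x::s) vs)).
  by exists X0; split=> // v; rewrite inE => /eqP ->.
have [sub|sub] := tot _ _ FX0 FX1.
  exists X1; split=> // v; rewrite inE => /orP[/eqP ->|]; [exact: sub| exact: X1s].
exists X0; split=> // v; rewrite inE => /orP[/eqP ->//|/X1s]; exact: sub.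
Qed.

Lemma basis_exists (S : V -> Prop) : exists b, hamel_basis S b.
Proof.
pose P := fun b : set V => (forall v, b v -> S v) /\ lin_indep b.
have [A [[AS Ai] Amax]] : exists A, P A /\ forall B, A `<` B -> ~ P B.
  apply: Zorn_bigcup => F FP tot; split.
    by move=> v [X FX Xv]; exact: (FP X FX).1.
  move=> s c us sF s0 v vs.
  have [sn|[X [FX Xs]]] := chain_fin tot sF; first by rewrite sn in vs.
  exact: ((FP X FX).2 s c us Xs s0 v vs).
exists A; split => //; split => // x Sx.
apply: NNPP => nsp.
have xA : ~ A x.
  move=> Ax; apply: nsp; exists [:: x], (fun _ => 1); split.
    by move=> v; rewrite inE => /eqP ->.
  by rewrite big_cons big_nil scale1r addr0.
apply: (Amax (A `|` [set x])).
  split; first by move=> v Av; left.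
  by move=> /(_ x (or_intror erefl)).
split; first by move=> v [/AS|->].
move=> s c us sA s0 v vs.
have [xs|xs] := boolP (x \in s); last first.
  apply: (Ai s c us) => // w ws; case: (sA w ws) => // wx.
  by move: ws; rewrite wx (negbTE xs).
move: s0; rewrite (big_rem _ xs) /= => s0.
have remA : forall w, w \in rem x s -> A w.
  move=> w; rewrite (mem_rem_uniq _ us) inE => /andP[wx ws].
  by case: (sA w ws) => // wx'; rewrite wx' eqxx in wx.
have [cx0|cx0] := eqVneq (c x) 0.
  move: s0; rewrite cx0 scale0r add0r => s0.
  have [->//|vx] := eqVneq v x.
  apply: (Ai _ c (rem_uniq _ us) remA s0).
  by rewrite (mem_rem_uniq _ us) inE vx vs.
exfalso; apply: nsp; exists (rem x s), (fun w => - (c x)^-1 * c w); split => //.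
have -> : \sum_(w <- rem x s) (- (c x)^-1 * c w) *: w
   = - (c x)^-1 *: \sum_(w <- rem x s) c w *: w.
  by rewrite scaler_sumr; apply: eq_bigr => w _; rewrite scalerA.
have -> : \sum_(w <- rem x s) c w *: w = - (c x *: x).
  by apply/eqP; rewrite -addr_eq0 addrC s0.
by rewrite scalerN scaleNr opprK scalerA mulVf // scale1r.
Qed.

Lemma transport (S1 S2 : V -> Prop) (f g : V -> V) :
 S1 0 -> (forall a x y, S1 x -> S1 y -> S1 (a*:x+y)) ->
 (forall x, S1 x -> S2 (f x)) -> (forall y, S2 y -> S1 (g y)) ->
 (forall x, S1 x -> g (f x) = x) -> (forall y, S2 y -> f (g y) = y) ->
 (forall a x y, S1 x -> S1 y -> f (a*:x+y) = a *: f x + f y) ->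
 same_dim S1 S2.
Proof.
move=> S10 S1c fS gS gf fg fl.
have f0 : f 0 = 0.
  have := fl (-1) 0 0 S10 S10.
  by rewrite scaler0 addr0 scaleN1r addNr.
have fsum : forall (s : seq V) (c : V -> R[i]), (forall v, v \in s -> S1 v) ->
    S1 (\sum_(v <- s) c v *: v) /\ f (\sum_(v <- s) c v *: v) = \sum_(v <- s) c v *: f v.
  move=> s c; elim: s => [|x s IH] H; first by rewrite !big_nil.
  have [IH1 IH2] := IH (fun v vs => H v (mem_behead (s:=x::s) vs)).
  have Sx := H x (mem_head _ _).
  by rewrite !big_cons; split; [apply: S1c | rewrite fl // IH2].
have [b1 [b1S [b1i b1s]]] := basis_exists S1.
exists b1, (fun w => exists2 v, b1 v & f v = w), f; split => //.
- split; first by move=> w [v /b1S/fS + <-].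
  split.
    move=> s c us sb s0 w ws.
    have sS2 : forall w, w \in s -> S2 w by move=> w' /sb [v /b1S/fS + <-].
    have gb : forall w, w \in s -> b1 (g w).
      by move=> w' /sb [v bv <-]; rewrite gf //; exact: b1S.
    have mS : forall v, v \in map g s -> S1 v.
      by move=> v /mapP [w' w's ->]; exact: b1S (gb _ w's).
    have e : \sum_(w <- s) c w *: w = f (\sum_(v <- map g s) c (f v) *: v).
      rewrite (fsum _ _ mS).2 big_map; apply: eq_big_seq => w' w's.
      by rewrite fg //; exact: sS2.
    have z0 : \sum_(v <- map g s) c (f v) *: v = 0.
      rewrite -[LHS](gf _ (fsum _ _ mS).1) -e s0 -f0 gf //.
    have ug : uniq (map g s).
      rewrite map_inj_in_uniq // => w1 w2 w1s w2s eg.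
      by rewrite -(fg _ (sS2 _ w1s)) eg fg //; exact: sS2.
    have mb : forall v, v \in map g s -> b1 v.
      by move=> v /mapP [w' w's ->]; exact: gb.
    have := b1i _ _ ug mb z0 (g w) (map_f g ws).
    by rewrite fg //; exact: sS2.
  move=> x S2x; have [s [c [sb e]]] := b1s _ (gS _ S2x).
  exists (map f s), (fun w => c (g w)); split.
    by move=> w /mapP [v vs ->]; exists v => //; exact: sb.
  rewrite -(fg _ S2x) e (fsum _ _ (fun v vs => b1S _ (sb v vs))).2 big_map.
  by apply: eq_big_seq => v vs; rewrite gf //; apply: b1S; apply: sb.
- by move=> v bv; exists v.
- by move=> v w /b1S Sv /b1S Sw e; rewrite -(gf _ Sv) e gf.
Qed.
End Bas.

Section Lin.
Variable R : realType.
Variable V : lmodType R[i].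

Lemma adj_lin (ip : V -> V -> R[i]) (T : linrel V) :
  (forall (a : R[i]) (x y z : V), ip (a *: x + y) z = a * ip x z + ip y z) ->
  is_linrel (adj ip T).
Proof.
move=> ipl.
have ip0 : forall z, ip 0 z = 0.
  move=> z; have := ipl (-1) 0 0 z.
  by rewrite scaler0 addr0 mulN1r addNr.
split; first by move=> x y _; rewrite !ip0.
by move=> a x y x' y' H H' u v Tuv; rewrite !ipl (H _ _ Tuv) (H' _ _ Tuv).
Qed.

Lemma lin_opp (T : linrel V) x y : is_linrel T -> T x y -> T (-x) (-y).
Proof.
move=> [T0 Tc] Txy; have := Tc (-1) _ _ _ _ Txy T0.
by rewrite !scaleN1r !addr0.
Qed.

Lemma lin_sub (T : linrel V) x y x' y' : is_linrel T -> T x y -> T x' y' ->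
  T (x - x') (y - y').
Proof.
move=> L Txy Tx'y'; have := L.2 1 _ _ _ _ Txy (lin_opp L Tx'y').
by rewrite !scale1r.
Qed.
End Lin.

Theorem lemma2p4 (R : realType) (V : lmodType R[i]) (ip : V -> V -> R[i])
  (A B : linrel V) :
  is_hilbert ip ->
  is_linrel A -> is_linrel B ->
  closed_rel ip A -> closed_rel ip B ->
  (* dual pair: A subset of adj B *)
  (forall x y, A x y -> adj ip B x y) ->
  (* adj B (0) meets N(adj A) trivially *)
  (forall y, mulval (adj ip B) y -> kerrel (adj ip A) y -> y = 0%R) ->
  (* adj A (0) meets N(adj B) trivially *)
  (forall y, mulval (adj ip A) y -> kerrel (adj ip B) y -> y = 0%R) ->
  same_dim (ker_one_plus (rel_comp (adj ip B) (adj ip A)))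
           (ker_one_plus (rel_comp (adj ip A) (adj ip B))).
Proof.
move=> [ipl _ _ _ _] _ _ _ _ _ H1 H2.
set P := adj ip A; set Q := adj ip B.
have LP : is_linrel P := adj_lin A ipl.
have LQ : is_linrel Q := adj_lin B ipl.
have u1 : forall g y y', P g y -> Q y (-g) -> P g y' -> Q y' (-g) -> y = y'.
  move=> g y y' Pa Qa Pb Qb; apply/eqP; rewrite -subr_eq0; apply/eqP.
  apply: H2; rewrite /mulval /kerrel.
    by have := lin_sub LP Pa Pb; rewrite subrr.
  by have := lin_sub LQ Qa Qb; rewrite subrr.
have u2 : forall y z z', Q y z -> P z (-y) -> Q y z' -> P z' (-y) -> z = z'.
  move=> y z z' Qa Pa Qb Pb; apply/eqP; rewrite -subr_eq0; apply/eqP.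
  apply: H1; rewrite /mulval /kerrel.
    by have := lin_sub LQ Qa Qb; rewrite subrr.
  by have := lin_sub LP Pa Pb; rewrite subrr.
pose f g := epsilon (inhabits (0 : V)) (fun y => P g y /\ Q y (-g)).
pose h y := - epsilon (inhabits (0 : V)) (fun z => Q y z /\ P z (-y)).
have fS : forall g, (exists y, P g y /\ Q y (-g)) -> P g (f g) /\ Q (f g) (-g).
  by move=> g ex; exact: (epsilon_spec _ _ ex).
have hS : forall y, (exists z, Q y z /\ P z (-y)) -> Q y (- h y) /\ P (- h y) (-y).
  by move=> y ex; rewrite /h opprK; exact: (epsilon_spec _ _ ex).
apply: (transport (f := f) (g := h)).
- by exists 0; split; [exact: LP.1 | rewrite oppr0; exact: LQ.1].
- move=> a x y [x1 [Px1 Qx1]] [y1 [Py1 Qy1]]; exists (a *: x1 + y1); split.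
    exact: LP.2.
  by have := LQ.2 a _ _ _ _ Qx1 Qy1; rewrite scalerN -opprD.
- move=> x Sx; have [Pa Qa] := fS x Sx; exists (-x); split => //.
  exact: (lin_opp LP Pa).
- move=> y Sy; have [Qa Pa] := hS y Sy; exists y; split.
    by have := lin_opp LP Pa; rewrite !opprK.
  exact: Qa.
- move=> x Sx; have [Pa Qa] := fS x Sx.
  have [Qb Pb] := hS (f x) (ex_intro _ (-x) (conj Qa (lin_opp LP Pa))).
  exact: oppr_inj (u2 _ _ _ Qb Pb Qa (lin_opp LP Pa)).
- move=> y Sy; have [Qa Pa] := hS y Sy.
  have ex : exists w, P (h y) w /\ Q w (- h y).
    exists y; split => //; by have := lin_opp LP Pa; rewrite !opprK.
  have [Pb Qb] := fS _ ex.
  apply: (u1 (h y)) => //; by have := lin_opp LP Pa; rewrite !opprK.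
- move=> a x y Sx Sy; have [Pa Qa] := fS x Sx; have [Pb Qb] := fS y Sy.
  have ex : exists w, P (a *: x + y) w /\ Q w (- (a *: x + y)).
    exists (a *: f x + f y); split; first exact: LP.2.
    by have := LQ.2 a _ _ _ _ Qa Qb; rewrite scalerN -opprD.
  have [Pc Qc] := fS _ ex.
  apply: (u1 (a *: x + y)) => //; first exact: LP.2.
  by have := LQ.2 a _ _ _ _ Qa Qb; rewrite scalerN -opprD.
Qed.
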